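(* Let $n\in\mathbb{N}$ and $r\in\mathbb{F}_2((x^{-1}))$ with $0\le\deg(r)<2^n$. Then $[r]=[P^{2^n}(r)]$.
   Context: $\mathbb{F}_2((x^{-1}))$ is the field of formal series $\sum_{z\in\mathbb{Z}}a_zx^z$, $a_z\in\mathbb{F}_2$, with $a_z\ne0$ for only finitely many positive $z$; $\deg$ is the largest exponent with nonzero coefficient. The polynomial part is $[\sum a_zx^z]=\sum_{z\ge0}a_zx^z$. $P(r)=\frac{x}{x+1}r$ with $\frac{x}{x+1}=\sum_{k\ge0}x^{-k}$. *)

(* Defs.v *)
From mathcomp Require Import all_boot all_order all_algebra.
From mathcomp Require Import zify.
Set Implicit Arguments. Unset Strict Implicit. Unset Printing Implicit Defensive.
Import Order.TTheory GRing.Theory Num.Theory.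
Local Open Scope ring_scope.

(* A formal series sum_{z in Z} a_z x^z over F_2 together with an explicit
   bound above which all coefficients vanish (so only finitely many positive
   z have a_z <> 0).  Series are compared through [coef] only. *)
Record lseries := LSeries {
  coef : int -> 'F_2 ;
  ubound : int ;
  coef_ub : forall z : int, ubound < z -> coef z = 0 }.

(* Cauchy product: (a b)_z = sum_i a_i b_{z-i}.  Nonzero terms only occur for
   z - ubound b <= i <= ubound a; the finite sum below runs over
   i = z - ubound b + k, k = 0 .. |ubound a + ubound b - z|, which covers
   all of them (each i once), so it is the full sum. *)
Definition lmul_coef (a b : lseries) (z : int) : 'F_2 :=
  \sum_(k < (absz (ubound a + ubound b - z)%R).+1)
     coef a (z - ubound b + k%:Z) * coef b (ubound b - k%:Z).

Lemma lmul_coef_ub (a b : lseries) (z : int) :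
  ubound a + ubound b < z -> lmul_coef a b z = 0.
Proof.
move=> hz; rewrite /lmul_coef big1 // => k _.
rewrite coef_ub ?mul0r //; lia.
Qed.

Definition lmul (a b : lseries) : lseries :=
  @LSeries (lmul_coef a b) (ubound a + ubound b) (@lmul_coef_ub a b).

(* The series x/(x+1) = sum_{k >= 0} x^{-k}. *)
Definition xx1_coef (z : int) : 'F_2 := if z <= 0 then 1 else 0.

Lemma xx1_coef_ub (z : int) : 0 < z -> xx1_coef z = 0.
Proof. by rewrite /xx1_coef => hz; rewrite leNgt hz. Qed.

Definition xx1 : lseries := @LSeries xx1_coef 0 xx1_coef_ub.

Definition P (r : lseries) : lseries := lmul xx1 r.

Definition has_deg (r : lseries) (d : int) : Prop :=
  coef r d != 0 /\ forall z : int, d < z -> coef r z = 0.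

Definition polypart (r : lseries) : {poly 'F_2} :=
  \poly_(i < (absz (ubound r)).+1) coef r i%:Z.

(* Main.v *)
Require Import Defs.
From mathcomp Require Import all_boot all_order all_algebra.
From mathcomp Require Import zify.
From Stdlib Require Import FunctionalExtensionality.
Import Order.TTheory GRing.Theory Num.Theory.
Local Open Scope ring_scope.

Lemma F2aa (x : 'F_2) : x + x = 0.
Proof. exact: (addrr_pchar2 (pchar_Fp (isT : prime 2))). Qed.

Definition D (w : int -> 'F_2) : int -> 'F_2 := fun z => w z + w (z + 1).

Lemma frob n w z : iter (2 ^ n) D w z = w z + w (z + (2 ^ n)%N%:Z).
Proof.
elim: n w z => [|n IH] w z; first by [].
rewrite expnS mul2n -addnn iterD IH !IH.
rewrite -addrA [X in _ + X]addrA F2aa add0r; congr (_ + w _); lia.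
Qed.

Lemma lmul_xx1 (s : lseries) z : z <= ubound s ->
  lmul_coef xx1 s z = \sum_(k < (absz (ubound s - z)).+1) coef s (ubound s - k%:Z).
Proof.
move=> hz; rewrite /lmul_coef /= add0r; apply: eq_bigr => k _.
rewrite /xx1_coef ifT ?mul1r //.
have := ltn_ord k; lia.
Qed.

Lemma DP (s : lseries) : D (coef (P s)) = coef s.
Proof.
apply: functional_extensionality => z; rewrite /D /P /=.
case: (ltP (ubound s) z) => hz.
  rewrite !lmul_coef_ub /= ?add0r ?coef_ub ?addr0 //; lia.
have [e he] : exists e : nat, ubound s - z = e%:Z by exists (absz (ubound s - z)); lia.
rewrite (@lmul_xx1 s z hz) he.
case: e he => [|e] he.
  rewrite lmul_coef_ub /= ?add0r; last lia.
  rewrite big_ord1 addr0; congr coef; rewrite /= subr0; lia.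
rewrite lmul_xx1; last lia.
have -> : (absz (ubound s - (z + 1))%R = e)%N by lia.
rewrite big_ord_recr /= [LHS]addrC addrA F2aa add0r; congr coef; lia.
Qed.

Lemma iterDP k (r : lseries) : iter k D (coef (iter k P r)) = coef r.
Proof.
elim: k => [|k IH] //.
by rewrite iterSr iterS DP.
Qed.

Lemma P_vanish (s : lseries) d : (forall y, d < y -> coef s y = 0) ->
  forall y, d < y -> coef (P s) y = 0.
Proof.
move=> hs y hy; rewrite /P /= /lmul_coef big1 // => k _.
rewrite /= /xx1_coef; case: ifP => h; last by rewrite mul0r.
rewrite hs ?mulr0 //; lia.
Qed.

Lemma iter_vanish k (r : lseries) d : (forall y, d < y -> coef r y = 0) ->
  forall y, d < y -> coef (iter k P r) y = 0.
Proof.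
move=> hr; elim: k => [|k IH] //=.
exact: P_vanish.
Qed.

Lemma iter_ub k (r : lseries) : ubound (iter k P r) = ubound r.
Proof. by elim: k => [|k IH] //=; rewrite add0r. Qed.

Theorem lemma3p1 (n : nat) (r : lseries) (d : int) :
  has_deg r d -> 0 <= d -> d < (2 ^ n)%N%:Z ->
  polypart r = polypart (iter (2 ^ n) P r).
Proof.
move=> [_ hd] d0 dn.
apply/polyP => i; rewrite /polypart !coef_poly iter_ub.
case: ifP => // _.
rewrite -(iterDP (2 ^ n) r) frob (@iter_vanish _ r d hd (i%:Z + (2 ^ n)%N%:Z)) ?addr0 //; lia.
Qed.
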